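(* Let $M$ be a finite-horizon MDP and $\mathcal D$ an arbitrary offline dataset of trajectories. For every policy $\pi$, $$p_{out}^{M,\mathcal D}(\pi)\le H\Big(\|\rho_\pi^M(s)-\rho_\pi^{M_{\mathcal D}}(s)\|_1+\|\rho_\pi^M(s,a,r)-\rho_\pi^{M_{\mathcal D}}(s,a,r)\|_1\Big).$$
   Context: $M=(\mathcal S,\mathcal A,\mathcal R,H,P,R)$ is a finite-horizon MDP with finite spaces, fixed initial state $s_0$, state space partitioned into disjoint layers $\mathcal S_h$ by timestep. Visitation distributions: $\rho_\pi(s_0)=1/H$, $\rho_\pi(s)=\sum_{\tilde s\in\mathcal S_{h-1},\tilde a}\rho_\pi(\tilde s)\pi(\tilde a\mid\tilde s)P(s\mid\tilde s,\tilde a)$ for $s\in\mathcal S_h$, $h>0$, and $\rho_\pi(s,a,r)=\rho_\pi(s)\pi(a\mid s)R(r\mid s,a)$; the $\ell_1$ norms are over all states, resp. all triples $(s,a,r)$. $M_{\mathcal D}$ is the dataset-induced MDP with empirical transitions $N(s,a,s')/N(s,a)$ and rewards $N(s,a,r)/N(s,a)$ when $N(s,a)>0$ and $0$ otherwise ($N$ counts occurrences in $\mathcal D$). $p_{out}^{M,\mathcal D}(\pi)=\sum_{\tau_H}p_\pi^M(\tau_H)\,\mathbf 1[\exists t: s_t\notin\mathcal D\text{ or }(s_t,a_t,r_t)\notin\mathcal D]$ is the probability that an $H$-step trajectory $\tau_H=(s_0,a_0,r_0,\dots,s_{H-1},a_{H-1},r_{H-1})$ generated by $\pi$ in $M$ contains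 a state or a state-action-reward triple not appearing in $\mathcal D$. *)

(* Defs.v *)
From HB Require Import structures.
From mathcomp Require Import all_boot all_order all_algebra.
Set Implicit Arguments. Unset Strict Implicit. Unset Printing Implicit Defensive.
Import Order.TTheory GRing.Theory Num.Theory.
Local Open Scope ring_scope.

(* Transition kernel  P s a s' = P(s' | s, a),
   reward kernel      Rr s a r = R(r | s, a),
   policy             pi s a   = pi(a | s),
   layering           layer s  = the timestep h with s \in S_h (h < H). *)

Section Defs.
Variables (R : realFieldType) (S A Rw : finType) (H : nat).
Variable (layer : S -> 'I_H) (s0 : S).
Variable (pi : S -> A -> R).

Fixpoint rho_h (P : S -> A -> S -> R) (h : nat) (s : S) : R :=
  match h with
  | 0 => if s == s0 then (H%:R)^-1 else 0
  | h'.+1 => \sum_(st : S | nat_of_ord (layer st) == h')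
               \sum_(a0 : A) rho_h P h' st * pi st a0 * P st a0 s
  end.

Definition rho_s (P : S -> A -> S -> R) (s : S) : R := rho_h P (layer s) s.

Definition rho_sar (P : S -> A -> S -> R) (Rr : S -> A -> Rw -> R)
  (x : S * A * Rw) : R :=
  rho_s P x.1.1 * pi x.1.1 x.1.2 * Rr x.1.1 x.1.2 x.2.

Definition dataset := seq (seq (S * A * Rw)).

Definition N_sar (D : dataset) (x : S * A * Rw) : nat :=
  \sum_(tau <- D) count (pred1 x) tau.
Definition N_sa (D : dataset) (s : S) (a : A) : nat :=
  \sum_(tau <- D) count (fun x : S * A * Rw => (x.1.1 == s) && (x.1.2 == a)) tau.
(* number of transitions (s_t, a_t) -> s_{t+1} = s' within trajectories *)
Definition N_sas (D : dataset) (s : S) (a : A) (s' : S) : nat :=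
  \sum_(tau <- D)
     count (fun xy : (S * A * Rw) * (S * A * Rw) =>
              [&& xy.1.1.1 == s, xy.1.1.2 == a & xy.2.1.1 == s'])
           (zip tau (behead tau)).

Definition P_D (D : dataset) (s : S) (a : A) (s' : S) : R :=
  if (0 < N_sa D s a)%N then (N_sas D s a s')%:R / (N_sa D s a)%:R else 0.
Definition R_D (D : dataset) (s : S) (a : A) (r : Rw) : R :=
  if (0 < N_sa D s a)%N then (N_sar D (s, a, r))%:R / (N_sa D s a)%:R else 0.

Definition state_in_D (D : dataset) (s : S) : bool :=
  has (fun tau => has (fun x : S * A * Rw => x.1.1 == s) tau) D.
Definition triple_in_D (D : dataset) (x : S * A * Rw) : bool :=
  has (fun tau => x \in tau) D.

Definition traj_prob (P : S -> A -> S -> R) (Rr : S -> A -> Rw -> R)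
  (tau : {ffun 'I_H -> S * A * Rw}) : R :=
  (if [forall t : 'I_H, (nat_of_ord t == 0)%N ==> ((tau t).1.1 == s0)]
   then 1 else 0)
  * (\prod_(t : 'I_H) (pi (tau t).1.1 (tau t).1.2 * Rr (tau t).1.1 (tau t).1.2 (tau t).2))
  * (\prod_(t : 'I_H) \prod_(u : 'I_H | nat_of_ord u == (nat_of_ord t).+1)
        P (tau t).1.1 (tau t).1.2 (tau u).1.1).

Definition p_out (P : S -> A -> S -> R) (Rr : S -> A -> Rw -> R) (D : dataset) : R :=
  \sum_(tau : {ffun 'I_H -> S * A * Rw})
     traj_prob P Rr tau *
     (if [exists t : 'I_H, ~~ state_in_D D (tau t).1.1 || ~~ triple_in_D D (tau t)]
      then 1 else 0).

Definition l1_states (P : S -> A -> S -> R) (D : dataset) : R :=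
  \sum_(s : S) `|rho_s P s - rho_s (P_D D) s|.
Definition l1_triples (P : S -> A -> S -> R) (Rr : S -> A -> Rw -> R) (D : dataset) : R :=
  \sum_(x : S * A * Rw) `|rho_sar P Rr x - rho_sar (P_D D) (R_D D) x|.
End Defs.

(* Main.v *)
Require Import Defs.
From HB Require Import structures.
From mathcomp Require Import all_boot all_order all_algebra.
From mathcomp Require Import ring.
Set Implicit Arguments. Unset Strict Implicit. Unset Printing Implicit Defensive.
Import Order.TTheory GRing.Theory Num.Theory.
Local Open Scope ring_scope.

Section Markov.
Variables (R : realFieldType) (T : finType) (init : T -> R) (K : T -> T -> R).
Hypothesis Kstoch : forall x, \sum_y K x y = 1.

Definition Wt n (tau : {ffun 'I_n.+1 -> T}) : R :=
  init (tau ord0) * \prod_(i < n) K (tau (widen_ord (leqnSn n) i)) (tau (lift ord0 i)).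

Fixpoint fwd (k : nat) (x : T) : R :=
  match k with 0 => init x | k'.+1 => \sum_z fwd k' z * K z x end.

Definition ext n (tau : {ffun 'I_n.+1 -> T}) (y : T) : {ffun 'I_n.+2 -> T} :=
  [ffun i : 'I_n.+2 => if (i < n.+1)%N then tau (inord i) else y].

Lemma ext_lt n (tau : {ffun 'I_n.+1 -> T}) y (i : 'I_n.+2) (j : 'I_n.+1) :
  val i = val j -> ext tau y i = tau j.
Proof.
move=> e; rewrite ffunE e ltn_ord; congr (tau _); apply: val_inj => /=.
by rewrite inordK.
Qed.

Lemma ext_max n (tau : {ffun 'I_n.+1 -> T}) y (i : 'I_n.+2) :
  val i = n.+1 -> ext tau y i = y.
Proof. by move=> e; rewrite ffunE e ltnn. Qed.

Lemma split_sum n (F : {ffun 'I_n.+2 -> T} -> R) :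
  \sum_tau F tau = \sum_(tau : {ffun 'I_n.+1 -> T}) \sum_y F (ext tau y).
Proof.
rewrite pair_big /=.
rewrite (reindex (fun p : {ffun 'I_n.+1 -> T} * T => ext p.1 p.2)) //.
exists (fun tau : {ffun 'I_n.+2 -> T} =>
          ([ffun j : 'I_n.+1 => tau (widen_ord (leqnSn _) j)], tau ord_max)).
  move=> [tau y] _ /=; congr (_, _).
    by apply/ffunP => j; rewrite ffunE (ext_lt _ _ (j := j)).
  by rewrite ext_max.
move=> tau _ /=; apply/ffunP => i; rewrite ffunE /=.
case: ifP => hi.
  by rewrite ffunE; congr (tau _); apply: val_inj => /=; rewrite inordK.
congr (tau _); apply: val_inj => /=.
by have := ltn_ord i; rewrite ltnS leq_eqVlt hi orbF => /eqP.
Qed.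

Lemma sum_ffun1 (F : {ffun 'I_1 -> T} -> R) :
  \sum_tau F tau = \sum_y F [ffun => y].
Proof.
rewrite (reindex (fun y : T => [ffun => y])) //.
exists (fun tau : {ffun 'I_1 -> T} => tau ord0) => [y _|tau _].
  by rewrite ffunE.
by apply/ffunP => i; rewrite ffunE (ord1 i).
Qed.

Lemma marg n (k : 'I_n.+1) (g : T -> R) :
  \sum_tau Wt tau * g (tau k) = \sum_z fwd k z * g z.
Proof.
elim: n k g => [|n IH] k g.
  rewrite sum_ffun1 (ord1 k) /=; apply: eq_bigr => y _.
  by rewrite /Wt big_ord0 mulr1 !ffunE.
rewrite split_sum.
have WE : forall (tau : {ffun 'I_n.+1 -> T}) y,
    Wt (ext tau y) = Wt tau * K (tau ord_max) y.
  move=> tau y; rewrite /Wt big_ord_recr /= -mulrA; congr (_ * _).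
    by rewrite (ext_lt _ _ (j := ord0)).
  congr (_ * _).
    apply: eq_bigr => i _.
    rewrite (ext_lt _ _ (j := widen_ord (leqnSn _) i)) //.
    by rewrite (ext_lt _ _ (j := lift ord0 i)).
  rewrite (ext_lt _ _ (j := ord_max)) //.
  by rewrite ext_max.
case: (ltnP k n.+1) => hk.
  pose k' : 'I_n.+1 := Ordinal hk.
  rewrite -(IH k') /=.
  apply: eq_bigr => tau _.
  under eq_bigr => y _ do rewrite WE (ext_lt _ _ (j := k')) //.
  by rewrite -mulr_suml -mulr_sumr Kstoch mulr1 mulrAC.
have ek : val k = n.+1 by apply/eqP; rewrite eqn_leq hk -ltnS ltn_ord.
rewrite ek /=.
under eq_bigr => tau _ do under eq_bigr => y _ do rewrite WE ext_max //.
transitivity (\sum_(tau : {ffun 'I_n.+1 -> T}) Wt tau *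
                  (fun z => \sum_y K z y * g y) (tau ord_max)).
  by apply: eq_bigr => tau _ /=; rewrite mulr_sumr; apply: eq_bigr => y _; rewrite mulrA.
rewrite (IH ord_max (fun z => \sum_y K z y * g y)) /=.
under eq_bigr => z _ do rewrite mulr_sumr.
rewrite exchange_big /=; apply: eq_bigr => y _.
by rewrite mulr_suml; apply: eq_bigr => z _; rewrite mulrA.
Qed.
End Markov.

Lemma sumT3 (R : realFieldType) (S A Rw : finType) (F : S * A * Rw -> R) :
  \sum_x F x = \sum_s \sum_a \sum_r F (s, a, r).
Proof.
by rewrite pair_big /= pair_big /=; apply: eq_bigr => [[[s a] r]] _.
Qed.

Theorem lemma4 (R : realFieldType) (S A Rw : finType) (H : nat)
  (layer : S -> 'I_H) (s0 : S)
  (P : S -> A -> S -> R) (Rr : S -> A -> Rw -> R) (pi : S -> A -> R)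
  (D : dataset S A Rw) :
  (* P, R and pi are probability distributions *)
  (forall s a s', 0 <= P s a s') ->
  (forall s a, \sum_(s' : S) P s a s' = 1) ->
  (forall s a r, 0 <= Rr s a r) ->
  (forall s a, \sum_(r : Rw) Rr s a r = 1) ->
  (forall s a, 0 <= pi s a) ->
  (forall s, \sum_(a : A) pi s a = 1) ->
  (* layered structure: s0 in S_0, transitions go from S_h to S_{h+1} *)
  nat_of_ord (layer s0) = 0%N ->
  (forall s a s', P s a s' != 0 -> ((layer s).+1 < H)%N ->
     nat_of_ord (layer s') = (layer s).+1) ->
  p_out H s0 pi P Rr D <=
    H%:R * (l1_states layer s0 pi P D + l1_triples layer s0 pi P Rr D).
Proof.
move=> P0 P1 R0 R1 pi0 pi1 l0 lP.
case: H layer l0 lP => [|n] layer l0 lP; first by case: (layer s0).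
pose piR := fun x : S * A * Rw => pi x.1.1 x.1.2 * Rr x.1.1 x.1.2 x.2.
pose init := fun x : S * A * Rw => (if x.1.1 == s0 then 1 else 0) * piR x.
pose K := fun x y : S * A * Rw => P x.1.1 x.1.2 y.1.1 * piR y.
have piR0 : forall x, 0 <= piR x by move=> x; rewrite /piR mulr_ge0.
have init0 : forall x, 0 <= init x.
  by move=> x; rewrite /init mulr_ge0 //; case: ifP.
have K0 : forall x y, 0 <= K x y by move=> x y; rewrite /K mulr_ge0.
have Kst : forall x, \sum_y K x y = 1.
  move=> x; rewrite sumT3 -[RHS](P1 x.1.1 x.1.2); apply: eq_bigr => s' _.
  rewrite -[RHS]mulr1 -(pi1 s') mulr_sumr; apply: eq_bigr => a' _.
  rewrite /K /piR /= -[X in _ = _ * X]mulr1 -(R1 s' a') !mulr_sumr.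
  by apply: eq_bigr => r _; rewrite mulrA.
have trajE : forall tau : {ffun 'I_n.+1 -> S * A * Rw}, traj_prob s0 pi P Rr tau = Wt init K tau.
  move=> tau; rewrite /traj_prob /Wt /init.
  have -> : [forall t : 'I_n.+1, (nat_of_ord t == 0)%N ==> ((tau t).1.1 == s0)]
            = ((tau ord0).1.1 == s0).
    apply/forallP/idP => [/(_ ord0) //|h t]; apply/implyP => /eqP t0.
    by have -> : t = ord0 by apply: val_inj.
  rewrite big_ord_recl big_ord_recr /=.
  rewrite [X in _ * (_ * X) = _]big_pred0 => [|u]; last first.
    by rewrite eq_sym (gtn_eqF (ltn_ord u)).
  rewrite /piR mulr1 -!mulrA; congr (_ * (_ * (_ * _))).
  rewrite -big_split; apply: eq_bigr => i _ /=.
  rewrite (big_pred1 (lift ord0 i)) => [|u]; last first.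
    by rewrite /= -val_eqE /= /bump leq0n.
  by rewrite mulrC.
have rho0 : forall t s, (t < n.+1)%N -> (nat_of_ord (layer s) != t) ->
    rho_h layer s0 pi P t s = 0.
  case=> [|t] s ht hl /=.
    by case: (s =P s0) => // e; rewrite e l0 in hl.
  apply: big1 => st /eqP hst; apply: big1 => a _.
  have [->|hP] := eqVneq (P st a s) 0; first by rewrite mulr0.
  by move: (lP _ _ _ hP); rewrite hst => /(_ ht) e; rewrite e eqxx in hl.
have fwdE : forall t, (t < n.+1)%N -> forall y,
    fwd init K t y = n.+1%:R * rho_h layer s0 pi P t y.1.1 * piR y.
  elim=> [|t IH] ht y /=.
    rewrite /init; case: ifP => _; last by rewrite !mulr0 mul0r.
    by rewrite mulfV ?pnatr_eq0.
  have ht' : (t < n.+1)%N by apply: ltnW.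
  under eq_bigr => z _ do rewrite (IH ht').
  rewrite sumT3 (bigID (fun s => nat_of_ord (layer s) == t)) /=.
  rewrite [X in _ + X]big1 ?addr0 => [|s hs]; last first.
    apply: big1 => a _; apply: big1 => r _.
    by rewrite rho0 // mulr0 !mul0r.
  rewrite mulr_sumr mulr_suml; apply: eq_bigr => s _.
  rewrite mulr_sumr mulr_suml; apply: eq_bigr => a _.
  rewrite -[RHS]mulr1 -(R1 s a) mulr_sumr; apply: eq_bigr => r _.
  rewrite /K /piR /=; ring.
rewrite /p_out.
apply: (le_trans (y := \sum_tau Wt init K tau *
    \sum_(t : 'I_n.+1) (fun z => if triple_in_D D z then 0 else 1) (tau t))).
  apply: ler_sum => tau _; rewrite trajE; apply: ler_wpM2l.
    by rewrite /Wt mulr_ge0 // prodr_ge0.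
  case: existsP => [[t ht]|_]; last first.
    by apply: sumr_ge0 => t _ /=; case: ifP.
  have nt : ~~ triple_in_D D (tau t).
    case/orP: ht => // hs; apply/negP => /hasP [tr htr xin].
    move/negP: hs; apply; apply/hasP; exists tr => //; apply/hasP.
    by exists (tau t).
  rewrite (bigD1 t) //= (negbTE nt) lerDl.
  by apply: sumr_ge0 => u _ /=; case: ifP.
under eq_bigr => tau _ do rewrite mulr_sumr.
rewrite exchange_big /=.
under eq_bigr => t _ do
  rewrite (@marg _ _ init K Kst _ t (fun z => if triple_in_D D z then 0 else 1)).
rewrite exchange_big /=.
apply: (le_trans (y := n.+1%:R * l1_triples layer s0 pi P Rr D)); last first.
  apply: ler_wpM2l; first exact: ler0n.
  by rewrite lerDr /l1_states sumr_ge0.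
rewrite /l1_triples mulr_sumr; apply: ler_sum => -[[s a] r] _.
rewrite -mulr_suml.
under eq_bigr => t _ do rewrite (fwdE _ (ltn_ord t)).
rewrite (bigD1 (layer s)) //= big1 ?addr0 => [|t ht]; last first.
  rewrite rho0 ?ltn_ord ?mulr0 ?mul0r //.
  by apply: contra ht => /eqP e; apply/eqP; apply: val_inj.
case: ifP => hin; first by rewrite mulr0 mulr_ge0.
have -> : rho_sar layer s0 pi (P_D R D) (R_D R D) (s, a, r) = 0.
  rewrite /rho_sar /R_D /=.
  have -> : N_sar D (s, a, r) = 0%N.
    rewrite /N_sar big_seq big1 // => tau htau; apply/count_memPn.
    by move: hin => /negbT /hasPn /(_ _ htau).
  by case: ifP => _; rewrite ?mul0r mulr0.
rewrite mulr1 subr0 -!mulrA; apply: ler_wpM2l; first exact: ler0n.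
by rewrite /rho_sar /rho_s /piR /= -mulrA ler_norm.
Qed.
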